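(* Let $G$ be a finite simple graph on $n$ vertices with $m$ edges. Let $I(G)=\sum_{\{u,v\}\in E(G)}|d(u)-d(v)|$, let $Z_G=\sum_{u\in V(G)} d(u)^2$, and let $\lambda_{\max}$ be the largest eigenvalue of the Laplacian matrix of $G$. Then $$I(G)\le \sqrt{m\,(nZ_G-4m^2)\,(\lambda_{\max}/n)}.$$
   Context: $d(u)$ denotes the degree of vertex $u$. The Laplacian matrix $L$ of a graph $G$ with vertex set $\{1,\dots,n\}$ is the $n\times n$ matrix with $L_{ij}=-1$ if $\{i,j\}\in E(G)$, $L_{ij}=0$ if $i\neq j$ and $\{i,j\}\notin E(G)$, and $L_{ii}=d(i)$; it is symmetric positive semidefinite, so its eigenvalues are real and nonnegative. *)

(* Defs.v *)
From HB Require Import structures.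
From mathcomp Require Import all_boot all_order all_algebra.
Set Implicit Arguments. Unset Strict Implicit. Unset Printing Implicit Defensive.
Import Order.TTheory GRing.Theory Num.Theory.
Local Open Scope ring_scope.

Definition simple_graph (n : nat) (e : rel 'I_n) : Prop :=
  irreflexive e /\ symmetric e.

Definition deg (n : nat) (e : rel 'I_n) (u : 'I_n) : nat := #|[set v | e u v]|.

Definition nedges (n : nat) (e : rel 'I_n) : nat :=
  #|[set p : 'I_n * 'I_n | (p.1 < p.2)%N && e p.1 p.2]|.

Definition irr_index (R : numDomainType) (n : nat) (e : rel 'I_n) : R :=
  \sum_(u < n) \sum_(v < n | (u < v)%N && e u v)
     `|(deg e u)%:R - (deg e v)%:R : R|.

Definition zagreb1 (n : nat) (e : rel 'I_n) : nat := \sum_(u < n) (deg e u) ^ 2.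

Definition laplacian (R : pzRingType) (n : nat) (e : rel 'I_n) : 'M[R]_n :=
  \matrix_(i < n, j < n)
    (if i == j then (deg e i)%:R else if e i j then -1 else 0).

(* Main.v *)
Require Import Defs.
From HB Require Import structures.
From mathcomp Require Import all_boot all_order all_algebra.
From mathcomp Require Import ring complex.
Set Implicit Arguments. Unset Strict Implicit. Unset Printing Implicit Defensive.
Import Order.TTheory GRing.Theory Num.Theory.
Local Open Scope ring_scope.

Section Ray.
Import Num.Def.
Local Open Scope sesquilinear_scope.
Lemma rayleigh (R : rcfType) n (A : 'M[R]_n) l :
  A^T = A -> (forall mu, eigenvalue A mu -> mu <= l) ->
  forall x : 'rV[R]_n, (x *m A *m x^T) 0 0 <= l * (x *m x^T) 0 0.
Proof.
move=> Asym Hev x.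
pose f := @real_complex_def R (Phant R).
have freal : forall r, f r \is Num.real by move=> r; apply/complex_realP; exists r.
have fconj : forall r, conjC (f r) = f r by move=> r; rewrite conj_Creal.
pose Ac := A ^ f.
have Hc : Ac ^t* = Ac.
  rewrite /Ac map_trmx Asym -map_mx_comp; apply/eq_map_mx => r /=; exact: fconj.
have Anorm : Ac \is normalmx by apply/normalmxP; rewrite Hc.
have Aherm : Ac \is hermsymmx by apply/is_hermitianmxP; rewrite expr0 scale1r Hc.
have Adec := orthomx_spectralP Anorm.
set P := spectralmx Ac in Adec.
set D := spectral_diag Ac in Adec.
have Punit : P \is unitarymx := spectral_unitarymx Ac.
have PU : P \in unitmx := spectral_unit Ac.
have PinvE : invmx P = P ^t* := invmx_unitary Punit.
have Dreal := hermitian_spectral_diag_real Aherm.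
have Dle : forall i, D 0 i <= f l.
  move=> i.
  have Di : D 0 i = f (complex.Re (D 0 i)) by rewrite /f RRe_real // (mxOverP Dreal).
  have ev : eigenvalue Ac (D 0 i).
  apply/eigenvalueP; exists (delta_mx 0 i *m P).
    rewrite Adec !mulmxA mulmxK // -[X in _ = _ *: X]rowE -rowE row_diag_mx.
    by rewrite -scalemxAl rowE.
  rewrite mulmx_free_eq0 ?row_free_unit //.
  by apply/negP => /eqP/matrixP/(_ 0 i); rewrite !mxE !eqxx => /eqP; rewrite oner_eq0.
  rewrite Di lecR; apply: Hev.
  rewrite -(eigenvalue_map f); move: ev; rewrite {1}Di; exact.
pose xc := x ^ f.
have xT : xc^T = xc ^t*.
  rewrite /xc map_trmx -map_mx_comp; apply/eq_map_mx => r /=; exact/esym/fconj.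
have fM : forall M : 'M[R]_1, f (M 0 0) = (M ^ f) 0 0 by move=> M; rewrite mxE.
suff H : f ((x *m A *m x^T) 0 0) <= f (l * (x *m x^T) 0 0) by move: H; rewrite /f lecR.
have fmul : forall a b, f (a * b) = f a * f b by move=> a b; rewrite /f rmorphM.
rewrite fmul !fM !map_mxM -!map_trmx -/xc -/Ac xT Adec PinvE.
pose y := xc *m P^t*.
have yT : y ^t* = P *m xc ^t*.
  by rewrite /y trmx_mul map_mxM trmxCK.
have PP : P^t* *m P = 1%:M by rewrite -PinvE mulVmx.
have -> : xc *m (P ^t* *m diag_mx D *m P) *m xc ^t* = y *m diag_mx D *m y^t*.
  by rewrite yT /y !mulmxA.
have -> : xc *m xc ^t* = y *m y^t*.
  by rewrite yT /y -!mulmxA [P^t* *m _]mulmxA PP mul1mx.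
rewrite !mxE mulr_sumr; apply: ler_sum => j _.
rewrite mul_mx_diag !mxE mulrAC [f l * _]mulrC; apply: ler_wpM2l; last exact: Dle.
exact: mul_conjC_ge0.
Qed.

End Ray.

Lemma sym_sum (R : nmodType) n (e : rel 'I_n) (F : 'I_n -> 'I_n -> R) :
  symmetric e ->
  \sum_i \sum_j (if e i j then F i j else 0) =
  \sum_i \sum_j (if e i j then F j i else 0).
Proof.
move=> se; rewrite exchange_big; apply: eq_bigr => i _; apply: eq_bigr => j _.
by rewrite se.
Qed.

Lemma half_sum (R : nmodType) n (e : rel 'I_n) (F : 'I_n -> 'I_n -> R) :
  irreflexive e -> symmetric e -> (forall i j, F i j = F j i) ->
  \sum_i \sum_j (if e i j then F i j else 0) =
  (\sum_(i < n) \sum_(j < n | (i < j)%N && e i j) F i j) *+ 2.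
Proof.
move=> ie se sF.
have -> : \sum_i \sum_j (if e i j then F i j else 0) =
  \sum_(i < n) \sum_(j < n) (if (i < j)%N && e i j then F i j else 0) +
  \sum_(i < n) \sum_(j < n) (if (j < i)%N && e i j then F i j else 0).
  rewrite -big_split; apply: eq_bigr => i _; rewrite -big_split; apply: eq_bigr => j _ /=.
  case: (ltngtP i j) => /= [_|_|/val_inj ->]; rewrite ?addr0 ?add0r //.
  by rewrite ie.
rewrite mulr2n; congr (_ + _); first by apply: eq_bigr => i _; rewrite [RHS]big_mkcond.
rewrite exchange_big; apply: eq_bigr => i _; rewrite [RHS]big_mkcond; apply: eq_bigr => j _.
by rewrite se sF.
Qed.

Lemma degE (R : pzSemiRingType) n (e : rel 'I_n) u :
  (deg e u)%:R = \sum_j (if e u j then 1 else 0 : R).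
Proof.
rewrite /deg -big_mkcond /= -sumr_const; apply: eq_bigl => j.
by rewrite inE.
Qed.


Lemma cancel2 (R : numDomainType) (a b : R) : a *+ 2 = b *+ 2 -> a = b.
Proof.
by move/eqP; rewrite -subr_eq0 -mulrnBl mulrn_eq0 /= subr_eq0 => /eqP.
Qed.

Lemma quad (R : numDomainType) n (e : rel 'I_n) (x : 'rV[R]_n) : simple_graph e ->
  (x *m laplacian R e *m x^T) 0 0 =
  \sum_(i < n) \sum_(j < n | (i < j)%N && e i j) (x 0 i - x 0 j)^+2.
Proof.
case=> ie se.
have E1 : (x *m laplacian R e *m x^T) 0 0 =
    \sum_i \sum_j (if e i j then x 0 i ^+ 2 - x 0 i * x 0 j else 0).
  rewrite mxE.
  transitivity (\sum_i \sum_j x 0 i * laplacian R e i j * x 0 j).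
    rewrite exchange_big; apply: eq_bigr => j _; rewrite !mxE mulr_suml.
    by apply: eq_bigr => i _; rewrite !mxE.
  apply: eq_bigr => i _.
  transitivity (\sum_j ((if j == i then x 0 i * (deg e i)%:R * x 0 j else 0) +
                        (if e i j then - (x 0 i * x 0 j) else 0))).
    apply: eq_bigr => j _; rewrite mxE (eq_sym i j).
    case: eqP => [->|_]; first by rewrite ie addr0.
    by case: (e i j); rewrite ?add0r ?mulr0 ?mul0r // mulrN1 mulNr.
  rewrite big_split /= -big_mkcond big_pred1_eq degE.
  transitivity (\sum_j (if e i j then x 0 i ^+ 2 else 0) + \sum_j (if e i j then - (x 0 i * x 0 j) else 0)).
    congr (_ + _); rewrite mulr_sumr mulr_suml; apply: eq_bigr => j _.
    by case: (e i j); rewrite ?mulr0 ?mul0r // mulr1 expr2.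
  rewrite -big_split; apply: eq_bigr => j _.
  by case: (e i j); rewrite /= ?addr0.
have S0 : \sum_i \sum_j (if e i j then x 0 j ^+ 2 - x 0 i ^+ 2 else 0) = 0 :> R.
  set S := (X in X = 0).
  have : S = - S.
    rewrite {1}/S sym_sum // /S -sumrN; apply: eq_bigr => i _.
    rewrite -sumrN; apply: eq_bigr => j _.
    by case: (e i j); rewrite ?oppr0 ?opprB.
  move/eqP; rewrite -addr_eq0 -mulr2n => /eqP H.
  by apply: cancel2; rewrite H mul0rn.
apply: cancel2; rewrite -half_sum //; last by move=> i j; rewrite -sqrrN opprB.
rewrite E1 -[LHS]addr0 -[X in _ + X = _]S0 -sumrMnl -big_split; apply: eq_bigr => i _.
rewrite -sumrMnl -big_split; apply: eq_bigr => j _.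
case: (e i j); rewrite /= ?mul0rn ?addr0 //.
rewrite mulr2n; ring.
Qed.


Lemma cs (R : realDomainType) (I : finType) (P : pred I) (a : I -> R) :
  (\sum_(k | P k) a k) ^+ 2 <= #|P|%:R * \sum_(k | P k) a k ^+ 2.
Proof.
have cst : forall c : R, \sum_(k | P k) c = #|P|%:R * c.
  by move=> c; rewrite sumr_const mulr_natl.
have H : 0 <= \sum_(k | P k) \sum_(l | P l) (a k - a l) ^+ 2.
  by apply: sumr_ge0 => k _; apply: sumr_ge0 => l _; apply: sqr_ge0.
have E : \sum_(k | P k) \sum_(l | P l) (a k - a l) ^+ 2 =
   (#|P|%:R * \sum_(k | P k) a k ^+ 2 - (\sum_(k | P k) a k) ^+ 2) *+ 2.
  transitivity (\sum_(k | P k) (#|P|%:R * a k ^+ 2 - (a k * \sum_(l | P l) a l) *+ 2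
                 + \sum_(l | P l) a l ^+ 2)).
    apply: eq_bigr => k _.
    rewrite -cst mulr_sumr -sumrMnl -sumrN -!big_split /=; apply: eq_bigr => l _.
    rewrite mulr2n; ring.
  rewrite !big_split /= sumrN sumrMnl -mulr_suml -mulr_sumr cst expr2.
  rewrite mulr2n; ring.
by move: H; rewrite E pmulrn_lge0 // subr_ge0.
Qed.

Theorem theorem2 (R : rcfType) (n : nat) (e : rel 'I_n) (lmax : R) :
  simple_graph e ->
  eigenvalue (laplacian R e) lmax ->
  (forall mu : R, eigenvalue (laplacian R e) mu -> mu <= lmax) ->
  irr_index R e <=
    Num.sqrt ((nedges e)%:R
              * ((n * zagreb1 e)%:R - 4 * (nedges e)%:R ^+ 2)
              * (lmax / n%:R)).
Proof.
move=> sg _ Hev; have [ie se] := sg.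
case: (posnP n) => [n0|npos].
  rewrite /irr_index big1 ?sqrtr_ge0 // => u _.
  by move: (ltn_ord u); rewrite {2}n0.
pose d := fun u : 'I_n => (deg e u)%:R : R.
pose m := (nedges e)%:R : R.
pose PP := [pred p : 'I_n * 'I_n | (p.1 < p.2)%N && e p.1 p.2].
have mE : m = #|PP|%:R.
  by rewrite /m /nedges; congr (_%:R); apply: eq_card => p; rewrite inE.
have pairE : forall F : 'I_n -> 'I_n -> R,
    \sum_(i < n) \sum_(j < n | (i < j)%N && e i j) F i j = \sum_(p | PP p) F p.1 p.2.
  by move=> F; rewrite pair_big_dep.
have hs : \sum_(u < n) d u = m *+ 2.
  transitivity (\sum_(u < n) \sum_(j < n) (if e u j then (fun _ _ => 1) u j else 0 : R)).
    by apply: eq_bigr => u _; rewrite /d degE.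
  rewrite half_sum // pairE mE sumr_const //.
pose c := m *+ 2 / n%:R.
pose x := \row_(u < n) (d u - c).
have Lsym : (laplacian R e)^T = laplacian R e.
  apply/matrixP => i j; rewrite !mxE (eq_sym j i) (se j i).
  by case: eqP => [->|].
have R1 := rayleigh Lsym Hev x.
rewrite quad // in R1.
have Qd : \sum_(i < n) \sum_(j < n | (i < j)%N && e i j) (x 0 i - x 0 j) ^+ 2
        = \sum_(i < n) \sum_(j < n | (i < j)%N && e i j) (d i - d j) ^+ 2.
  apply: eq_bigr => i _; apply: eq_bigr => j _; rewrite !mxE.
  congr (_ ^+ 2); ring.
rewrite Qd in R1.
have xx : (x *m x^T) 0 0 = \sum_(u < n) (d u - c) ^+ 2.
  by rewrite mxE; apply: eq_bigr => u _; rewrite !mxE expr2.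
have Zr : (zagreb1 e)%:R = \sum_(u < n) d u ^+ 2 :> R.
  by rewrite /zagreb1 natr_sum; apply: eq_bigr => u _; rewrite natrX.
have Sx : \sum_(u < n) (d u - c) ^+ 2 =
    (zagreb1 e)%:R - c * (m *+ 2) *+ 2 + n%:R * c ^+ 2.
  transitivity (\sum_(u < n) (d u ^+ 2 - (c * d u) *+ 2 + c ^+ 2)).
    by apply: eq_bigr => u _; rewrite mulr2n; ring.
  rewrite !big_split /= sumrN sumrMnl -mulr_sumr sumr_const card_ord mulr_natl.
  by rewrite Zr hs.
rewrite xx Sx in R1.
have I0 : 0 <= irr_index R e.
  by apply: sumr_ge0 => i _; apply: sumr_ge0 => j _; apply: normr_ge0.
rewrite -(ger0_norm I0) -sqrtr_sqr; apply: ler_wsqrtr.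
have CS := cs PP (fun p => `|d p.1 - d p.2|).
rewrite /irr_index pairE.
apply: (le_trans CS); rewrite -mE.
have -> : \sum_(k | PP k) `|d k.1 - d k.2| ^+ 2 =
    \sum_(i < n) \sum_(j < n | (i < j)%N && e i j) (d i - d j) ^+ 2.
  by rewrite pairE; apply: eq_bigr => p _; rewrite real_normK // num_real.
have m0 : 0 <= m by rewrite /m ler0n.
apply: (le_trans (ler_wpM2l m0 R1)).
rewrite le_eqVlt; apply/orP; left; apply/eqP.
have nz : n%:R != 0 :> R by rewrite pnatr_eq0 -lt0n.
by rewrite natrM /c; field.
Qed.
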